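(* Let $n\ge 5$ and let $\sigma$ be a maximal simplex of $\Delta_n$. Suppose there are a vertex $v$, distinct $i_0,j_0,k_0\in[n]$, and distinct $p_0,q_0\in[n]\setminus\{i_0,j_0,k_0\}$ such that $\{v^{i_0,j_0},v^{i_0,k_0},v^{j_0,k_0},v^{p_0},v^{q_0}\}\subseteq\sigma$. Then $\sigma=N(v)\cup K_v^{i_0,j_0,k_0}$.
   Context: $\mathbb{I}_n$ is the $n$-dimensional hypercube graph on vertex set $\{0,1\}^n$ (adjacent iff differing in exactly one coordinate), with Hamming distance $d(v,w)=\#\{i: v(i)\ne w(i)\}$. $\Delta_n=\mathcal{VR}(\mathbb{I}_n;3)$ is the simplicial complex whose simplices are the subsets $\sigma\subseteq\{0,1\}^n$ with $d(x,y)\le 3$ for all $x,y\in\sigma$. $[n]=\{1,\dots,n\}$. For a vertex $v$ and distinct $i_1,\dots,i_k$, $v^{i_1,\dots,i_k}$ is $v$ with exactly coordinates $i_1,\dots,i_k$ changed. $N(v)=\{v^i:i\in[n]\}$. For distinct $i,j,k$, $K_v^{i,j,k}=\{v,v^{i,j},v^{j,k},v^{i,k}\}$. *)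

(* Defs.v *)
From mathcomp Require Import all_boot.
Set Implicit Arguments. Unset Strict Implicit. Unset Printing Implicit Defensive.

(* Vertices of the hypercube I_n: {0,1}^n, coordinates indexed by 'I_n
   (0-based stand-in for [n] = {1,..,n}). *)
Definition vert (n : nat) := {ffun 'I_n -> bool}.

Definition hdist (n : nat) (v w : vert n) : nat := #|[set i | v i != w i]|.

(* sigma is a simplex of Delta_n = VR(I_n; 3). *)
Definition is_simplex (n : nat) (s : {set vert n}) : Prop :=
  s != set0 /\ forall x y, x \in s -> y \in s -> hdist x y <= 3.

Definition is_maximal_simplex (n : nat) (s : {set vert n}) : Prop :=
  is_simplex s /\ forall t : {set vert n}, is_simplex t -> s \subset t -> t = s.

Definition flip (n : nat) (v : vert n) (S : {set 'I_n}) : vert n :=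
  [ffun i => if i \in S then ~~ v i else v i].

Definition nbhd (n : nat) (v : vert n) : {set vert n} :=
  [set flip v [set i] | i : 'I_n].

Definition Kv (n : nat) (v : vert n) (i j k : 'I_n) : {set vert n} :=
  [set v; flip v [set i; j]; flip v [set j; k]; flip v [set i; k]].

(* Main.v *)
Require Import Defs.
From mathcomp Require Import all_boot zify.
Set Implicit Arguments. Unset Strict Implicit. Unset Printing Implicit Defensive.

Lemma hdist_sum n (x y : vert n) : hdist x y = \sum_l (x l != y l).
Proof.
rewrite /hdist -sum1_card big_mkcond /=; apply: eq_bigr => l _.
by rewrite inE; case: (x l != y l).
Qed.

Lemma flip0 n (v : vert n) : flip v set0 = v.
Proof. by apply/ffunP => l; rewrite ffunE inE. Qed.

Lemma flipD n (v x : vert n) (S : {set 'I_n}) :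
  (forall l, (x l != v l) = (l \in S)) -> x = flip v S.
Proof.
move=> H; apply/ffunP => l; rewrite ffunE -H.
by case: (x l); case: (v l).
Qed.

Lemma hdist_flip n (v : vert n) A B : hdist (flip v A) (flip v B) <= #|A :|: B|.
Proof.
apply: subset_leq_card; apply/subsetP => l; rewrite !inE !ffunE.
by case: (l \in A); case: (l \in B); rewrite ?eqxx ?orbT.
Qed.

Lemma card3 (T : finType) (a b c : T) : #|[set a; b; c]| <= 3.
Proof.
rewrite -setUA cardsU1 cards2; by case: (a \notin _); case: (b != c).
Qed.

Lemma neqN (a b : bool) : (a != ~~ b) = ~~ (a != b).
Proof. by case: a; case: b. Qed.

Lemma split5 n (F : 'I_n -> nat) (i j k p q : 'I_n) :
  i != j -> i != k -> j != k -> p != i -> p != j -> p != k ->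
  q != i -> q != j -> q != k -> p != q ->
  \sum_l F l = F i + F j + F k + F p + F q + \sum_(l | l \notin [set i; j; k; p; q]) F l.
Proof.
move=> ij ik jk pi pj pk qi qj qk pq.
rewrite (bigD1 i) //= (bigD1 j) /=; last by rewrite eq_sym.
rewrite (bigD1 k) /=; last by rewrite eq_sym ik eq_sym jk.
rewrite (bigD1 p) /=; last by rewrite pi pj pk.
rewrite (bigD1 q) /=; last by rewrite qi qj qk eq_sym pq.
rewrite !addnA; congr (_ + _); apply: eq_bigl => l.
by rewrite !inE !negb_or.
Qed.

Theorem mainTheorem15 (n : nat) (hn : 5 <= n) (sigma : {set vert n})
  (hmax : is_maximal_simplex sigma) (v : vert n) (i0 j0 k0 p0 q0 : 'I_n)
  (hij : i0 != j0) (hik : i0 != k0) (hjk : j0 != k0)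
  (hp : p0 \notin [set i0; j0; k0]) (hq : q0 \notin [set i0; j0; k0])
  (hpq : p0 != q0)
  (hsub : [set flip v [set i0; j0]; flip v [set i0; k0]; flip v [set j0; k0];
           flip v [set p0]; flip v [set q0]] \subset sigma) :
  sigma = nbhd v :|: Kv v i0 j0 k0.
Proof.
have [[sne sdist] smax] := hmax.
have pi : p0 != i0 by apply: contraNneq hp => ->; rewrite !inE eqxx ?orbT.
have pj : p0 != j0 by apply: contraNneq hp => ->; rewrite !inE eqxx ?orbT.
have pk : p0 != k0 by apply: contraNneq hp => ->; rewrite !inE eqxx ?orbT.
have qi : q0 != i0 by apply: contraNneq hq => ->; rewrite !inE eqxx ?orbT.
have qj : q0 != j0 by apply: contraNneq hq => ->; rewrite !inE eqxx ?orbT.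
have qk : q0 != k0 by apply: contraNneq hq => ->; rewrite !inE eqxx ?orbT.
have ji : j0 != i0 by rewrite eq_sym.
have ki : k0 != i0 by rewrite eq_sym.
have kj : k0 != j0 by rewrite eq_sym.
have ip : i0 != p0 by rewrite eq_sym.
have jp : j0 != p0 by rewrite eq_sym.
have kp : k0 != p0 by rewrite eq_sym.
have iq : i0 != q0 by rewrite eq_sym.
have jq : j0 != q0 by rewrite eq_sym.
have kq : k0 != q0 by rewrite eq_sym.
have qp : q0 != p0 by rewrite eq_sym.
set U := nbhd v :|: Kv v i0 j0 k0.
have Uchar x : x \in U -> exists S, x = flip v S /\
    (#|S| <= 1 \/ (S \subset [set i0; j0; k0] /\ #|S| <= 2)).
  rewrite inE => /orP[/imsetP[l _ ->]|].
    by exists [set l]; split => //; left; rewrite cards1.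
  rewrite /Kv !inE -!orbA => /or4P[]/eqP->.
  - by exists set0; rewrite flip0 cards0; split => //; left.
  - exists [set i0; j0]; split => //; right; rewrite cards2; split; last by case: (_ != _).
    by apply/subsetP => l; rewrite !inE => /orP[]->; rewrite ?orbT.
  - exists [set j0; k0]; split => //; right; rewrite cards2; split; last by case: (_ != _).
    by apply/subsetP => l; rewrite !inE => /orP[]->; rewrite ?orbT.
  - exists [set i0; k0]; split => //; right; rewrite cards2; split; last by case: (_ != _).
    by apply/subsetP => l; rewrite !inE => /orP[]->; rewrite ?orbT.
have Usimp : is_simplex U.
  split.
    apply/set0Pn; exists v; rewrite inE; apply/orP; right.
    by rewrite /Kv !inE eqxx.
  move=> x y /Uchar[A [-> hA]] /Uchar[B [-> hB]].
  apply: leq_trans (hdist_flip _ _ _) _.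
  case: hA => [hA|[sA cA]].
    rewrite cardsU; apply: leq_trans (leq_subr _ _) _.
    by case: hB => [hB|[_ hB]]; clear -hA hB; lia.
  case: hB => [hB|[sB cB]].
    rewrite cardsU; apply: leq_trans (leq_subr _ _) _.
    by clear -cA hB; lia.
  apply: leq_trans (card3 i0 j0 k0).
  by apply: subset_leq_card; rewrite subUset sA sB.
suff sU : sigma \subset U by symmetry; apply: smax.
apply/subsetP => x xs.
have d S : flip v S \in sigma -> hdist x (flip v S) <= 3.
  by move=> h; apply: sdist.
set T := [set i0; j0; k0; p0; q0].
set RS := [set l | (l \notin T) && (x l != v l)].
have hd (S : {set 'I_n}) : S \subset T -> hdist x (flip v S) =
   (x i0 != flip v S i0) + (x j0 != flip v S j0) + (x k0 != flip v S k0)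
   + (x p0 != flip v S p0) + (x q0 != flip v S q0) + #|RS|.
  move=> sT; rewrite hdist_sum (split5 _ hij hik hjk pi pj pk qi qj qk hpq).
  congr (_ + _); rewrite -sum1_card [RHS]big_mkcond [LHS]big_mkcond /=.
  apply: eq_bigr => l _; rewrite [l \in RS]inE.
  case lT: (l \notin T) => //=; rewrite ffunE.
  have -> : (l \in S) = false.
    by apply: negbTE; apply: contra lT; apply: (subsetP sT).
  by case: (x l != v l).
have ne := (negbTE hij, negbTE hik, negbTE hjk, negbTE ji, negbTE ki, negbTE kj,
   negbTE pi, negbTE pj, negbTE pk, negbTE qi, negbTE qj, negbTE qk, negbTE ip,
   negbTE jp, negbTE kp, negbTE iq, negbTE jq, negbTE kq, negbTE hpq, negbTE qp).
have Dchar l : (x l != v l) = [|| (l == i0) && (x i0 != v i0),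
    (l == j0) && (x j0 != v j0), (l == k0) && (x k0 != v k0),
    (l == p0) && (x p0 != v p0), (l == q0) && (x q0 != v q0) | l \in RS].
  rewrite /RS /T !inE.
  case: (eqVneq l i0) => [->|li]; first by rewrite ?ne /= ?orbF.
  case: (eqVneq l j0) => [->|lj]; first by rewrite ?ne /= ?orbF.
  case: (eqVneq l k0) => [->|lk]; first by rewrite ?ne /= ?orbF.
  case: (eqVneq l p0) => [->|lp]; first by rewrite ?ne /= ?orbF.
  case: (eqVneq l q0) => [->|lq]; first by rewrite ?ne /= ?orbF.
  by [].
have m1 : flip v [set i0; j0] \in sigma.
  by apply: (subsetP hsub); rewrite !inE eqxx ?orbT.
have m2 : flip v [set i0; k0] \in sigma.
  by apply: (subsetP hsub); rewrite !inE eqxx ?orbT.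
have m3 : flip v [set j0; k0] \in sigma.
  by apply: (subsetP hsub); rewrite !inE eqxx ?orbT.
have m4 : flip v [set p0] \in sigma.
  by apply: (subsetP hsub); rewrite !inE eqxx ?orbT.
have m5 : flip v [set q0] \in sigma.
  by apply: (subsetP hsub); rewrite !inE eqxx ?orbT.
have s1 : [set i0; j0] \subset T.
  by apply/subsetP => l; rewrite /T !inE; case/orP => /eqP->; rewrite eqxx ?orbT.
have s2 : [set i0; k0] \subset T.
  by apply/subsetP => l; rewrite /T !inE; case/orP => /eqP->; rewrite eqxx ?orbT.
have s3 : [set j0; k0] \subset T.
  by apply/subsetP => l; rewrite /T !inE; case/orP => /eqP->; rewrite eqxx ?orbT.
have s4 : [set p0] \subset T.
  by apply/subsetP => l; rewrite /T !inE => /eqP->; rewrite eqxx ?orbT.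
have s5 : [set q0] \subset T.
  by apply/subsetP => l; rewrite /T !inE => /eqP->; rewrite eqxx ?orbT.
have H1 := d _ m1; rewrite (hd _ s1) in H1.
have H2 := d _ m2; rewrite (hd _ s2) in H2.
have H3 := d _ m3; rewrite (hd _ s3) in H3.
have H4 := d _ m4; rewrite (hd _ s4) in H4.
have H5 := d _ m5; rewrite (hd _ s5) in H5.
rewrite !ffunE !inE ?eqxx ?ne /= ?neqN in H1 H2 H3 H4 H5.
have memv : flip v set0 \in U.
  by rewrite flip0 inE; apply/orP; right; rewrite /Kv !inE eqxx.
have mem1 l : flip v [set l] \in U.
  by rewrite inE; apply/orP; left; apply: imset_f.
have memij : flip v [set i0; j0] \in U.
  by rewrite inE; apply/orP; right; rewrite /Kv !inE eqxx ?orbT.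
have memjk : flip v [set j0; k0] \in U.
  by rewrite inE; apply/orP; right; rewrite /Kv !inE eqxx ?orbT.
have memik : flip v [set i0; k0] \in U.
  by rewrite inE; apply/orP; right; rewrite /Kv !inE eqxx ?orbT.
have fin S : flip v S \in U -> (forall l, (x l != v l) = (l \in S)) -> x \in U.
  by move=> h /flipD ->.
have [R0|[[l0 R1]|R2]] : RS = set0 \/ (exists l0, RS = [set l0]) \/ 1 < #|RS|.
- case cR: #|RS| => [|[|m]].
  + by left; apply: cards0_eq.
  + by right; left; apply/cards1P; rewrite cR.
  + by right; right.
- rewrite R0 cards0 in H1 H2 H3 H4 H5; rewrite R0 in Dchar.
  move: H1 H2 H3 H4 H5 Dchar.
  move: (x i0 != v i0) (x j0 != v j0) (x k0 != v k0) (x p0 != v p0) (x q0 != v q0)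
    => ei ej ek ep eq.
  case: ei; case: ej; case: ek; case: ep; case: eq => /= H1 H2 H3 H4 H5 Dc;
   try (exfalso; clear -H1 H2 H3 H4 H5; lia);
   first [ (apply: (fin _ memv); move=> l; rewrite Dc !inE ?andbT ?andbF /= ?orbF ?orFb; done)
         | (apply: (fin _ (mem1 i0)); move=> l; rewrite Dc !inE ?andbT ?andbF /= ?orbF ?orFb; done)
         | (apply: (fin _ (mem1 j0)); move=> l; rewrite Dc !inE ?andbT ?andbF /= ?orbF ?orFb; done)
         | (apply: (fin _ (mem1 k0)); move=> l; rewrite Dc !inE ?andbT ?andbF /= ?orbF ?orFb; done)
         | (apply: (fin _ (mem1 p0)); move=> l; rewrite Dc !inE ?andbT ?andbF /= ?orbF ?orFb; done)
         | (apply: (fin _ (mem1 q0)); move=> l; rewrite Dc !inE ?andbT ?andbF /= ?orbF ?orFb; done)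
         | (apply: (fin _ memij); move=> l; rewrite Dc !inE ?andbT ?andbF /= ?orbF ?orFb; done)
         | (apply: (fin _ memjk); move=> l; rewrite Dc !inE ?andbT ?andbF /= ?orbF ?orFb; done)
         | (apply: (fin _ memik); move=> l; rewrite Dc !inE ?andbT ?andbF /= ?orbF ?orFb; done) ].
- rewrite R1 cards1 in H1 H2 H3 H4 H5; rewrite R1 in Dchar.
  move: H1 H2 H3 H4 H5 Dchar.
  move: (x i0 != v i0) (x j0 != v j0) (x k0 != v k0) (x p0 != v p0) (x q0 != v q0)
    => ei ej ek ep eq.
  case: ei; case: ej; case: ek; case: ep; case: eq => /= H1 H2 H3 H4 H5 Dc;
   try (exfalso; clear -H1 H2 H3 H4 H5; lia).
  by apply: (fin _ (mem1 l0)); move=> l; rewrite Dc !inE ?andbT ?andbF /= ?orbF ?orFb.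
- move: H1 H2 H3 H4 H5 R2.
  move: (x i0 != v i0) (x j0 != v j0) (x k0 != v k0) (x p0 != v p0) (x q0 != v q0) #|RS|
    => ei ej ek ep eq r.
  case: ei; case: ej; case: ek; case: ep; case: eq => /= H1 H2 H3 H4 H5 R2;
   exfalso; clear -H1 H2 H3 H4 H5 R2; lia.
Qed.
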